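(* Let $I\subseteq\mathbb{R}$ be an interval, $p\in I$, and let $f: I\to\mathbb{R}$ be a continuous star-convex function with center $p$. Then: (i) if $f|_{]-\infty,p]\cap I}$ and $f|_{[p,\infty[\cap I}$ are both convex, then $epi(f)$ is a star-convex set; (ii) if $f|_{]-\infty,p]\cap I}$ and $f|_{[p,\infty[\cap I}$ are both concave, then $hypo(f)$ is a star-convex set; (iii) if $f|_{]-\infty,p]\cap I}$ is convex and $f|_{[p,\infty[\cap I}$ is concave, then $\{(x,t): x\in\,]-\infty,p]\cap I,\ f(x)\leq t\}\cup\{(x,t): x\in[p,\infty[\cap I,\ f(x)\geq t\}$ is a star-convex set; (iv) if $f|_{]-\infty,p]\cap I}$ is concave and $f|_{[p,\infty[\cap I}$ is convex, then $\{(x,t): x\in\,]-\infty,p]\cap I,\ f(x)\geq t\}\cup\{(x,t): x\in[p,\infty[\cap I,\ f(x)\leq t\}$ is a star-convex set.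
   Context: $epi(f)=\{(x,t)\in I\times\mathbb{R}: f(x)\leq t\}$ and $hypo(f)=\{(x,t)\in I\times\mathbb{R}: f(x)\geq t\}$. A function $f: I\to\mathbb{R}$ is star-convex with center $p\in I$ if for every $x\in I$, either $f(tx+(1-t)p)\leq tf(x)+(1-t)f(p)$ for all $t\in[0,1]$, or $f(tx+(1-t)p)\geq tf(x)+(1-t)f(p)$ for all $t\in[0,1]$. A set $X\subseteq\mathbb{R}^2$ is star-convex if there exists $x_0\in X$ such that for all $x\in X$ and $t\in[0,1]$, $tx+(1-t)x_0\in X$. *)

(* Defs.v *)
From Stdlib Require Import Reals.
Open Scope R_scope.

Definition is_interval (I : R -> Prop) : Prop :=
  forall x y z, I x -> I y -> x <= z <= y -> I z.

Definition continuous_on (I : R -> Prop) (f : R -> R) : Prop :=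
  forall x, I x -> forall eps, 0 < eps -> exists delta, 0 < delta /\
    forall y, I y -> Rabs (y - x) < delta -> Rabs (f y - f x) < eps.

Definition star_convex_fun (I : R -> Prop) (f : R -> R) (p : R) : Prop :=
  I p /\
  forall x, I x ->
    (forall t, 0 <= t <= 1 -> f (t * x + (1 - t) * p) <= t * f x + (1 - t) * f p) \/
    (forall t, 0 <= t <= 1 -> f (t * x + (1 - t) * p) >= t * f x + (1 - t) * f p).

Definition convex_on (D : R -> Prop) (f : R -> R) : Prop :=
  forall x y t, D x -> D y -> 0 <= t <= 1 ->
    f (t * x + (1 - t) * y) <= t * f x + (1 - t) * f y.

Definition concave_on (D : R -> Prop) (f : R -> R) : Prop :=
  forall x y t, D x -> D y -> 0 <= t <= 1 ->
    f (t * x + (1 - t) * y) >= t * f x + (1 - t) * f y.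

Definition left_part (I : R -> Prop) (p : R) : R -> Prop := fun x => x <= p /\ I x.
Definition right_part (I : R -> Prop) (p : R) : R -> Prop := fun x => p <= x /\ I x.

Definition star_convex_set (X : R * R -> Prop) : Prop :=
  exists x0, X x0 /\ forall x t, X x -> 0 <= t <= 1 ->
    X (t * fst x + (1 - t) * fst x0, t * snd x + (1 - t) * snd x0).

Definition epigraph (I : R -> Prop) (f : R -> R) : R * R -> Prop :=
  fun z => I (fst z) /\ f (fst z) <= snd z.

Definition hypograph (I : R -> Prop) (f : R -> R) : R * R -> Prop :=
  fun z => I (fst z) /\ f (fst z) >= snd z.

(* Main.v *)
Require Import Defs.
From Stdlib Require Import Reals Lra.
Open Scope R_scope.

Lemma cmb_I (I : R -> Prop) p x t : is_interval I -> I p -> I x -> 0 <= t <= 1 ->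
  I (t * x + (1 - t) * p).
Proof.
  intros HI Hp Hx Ht. destruct (Rle_dec x p).
  - apply (HI x p); auto; split; nra.
  - apply (HI p x); auto; split; nra.
Qed.

Lemma cmb_left (I : R -> Prop) p x t : is_interval I -> I p -> I x -> x <= p -> 0 <= t <= 1 ->
  left_part I p (t * x + (1 - t) * p).
Proof. intros. split; [nra | apply cmb_I; auto]. Qed.

Lemma cmb_right (I : R -> Prop) p x t : is_interval I -> I p -> I x -> p <= x -> 0 <= t <= 1 ->
  right_part I p (t * x + (1 - t) * p).
Proof. intros. split; [nra | apply cmb_I; auto]. Qed.

Theorem theorem4p2 (I : R -> Prop) (p : R) (f : R -> R) :
  is_interval I -> I p -> continuous_on I f -> star_convex_fun I f p ->
  (convex_on (left_part I p) f -> convex_on (right_part I p) f ->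
     star_convex_set (epigraph I f)) /\
  (concave_on (left_part I p) f -> concave_on (right_part I p) f ->
     star_convex_set (hypograph I f)) /\
  (convex_on (left_part I p) f -> concave_on (right_part I p) f ->
     star_convex_set (fun z => (left_part I p (fst z) /\ f (fst z) <= snd z) \/
                               (right_part I p (fst z) /\ f (fst z) >= snd z))) /\
  (concave_on (left_part I p) f -> convex_on (right_part I p) f ->
     star_convex_set (fun z => (left_part I p (fst z) /\ f (fst z) >= snd z) \/
                               (right_part I p (fst z) /\ f (fst z) <= snd z))).
Proof.
  intros HI Hp _ _.
  assert (Lp : left_part I p p) by (split; [lra|auto]).
  assert (Rp : right_part I p p) by (split; [lra|auto]).
  split; [|split; [|split]]; intros H1 H2; exists (p, f p); simpl.
  - split; [split; simpl; auto; lra|].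
    intros [x s] t [Hx Hs] Ht; simpl in *. split; [apply cmb_I; auto|simpl].
    destruct (Rle_dec x p).
    + pose proof (H1 x p t (conj r Hx) Lp Ht). nra.
    + pose proof (H2 x p t (conj (Rlt_le _ _ (Rnot_le_lt _ _ n)) Hx) Rp Ht). nra.
  - split; [split; simpl; auto; lra|].
    intros [x s] t [Hx Hs] Ht; simpl in *. split; [apply cmb_I; auto|simpl].
    destruct (Rle_dec x p).
    + pose proof (H1 x p t (conj r Hx) Lp Ht). nra.
    + pose proof (H2 x p t (conj (Rlt_le _ _ (Rnot_le_lt _ _ n)) Hx) Rp Ht). nra.
  - split; [left; split; auto; lra|].
    intros [x s] t [[Hx Hs]|[Hx Hs]] Ht; simpl in *.
    + left. split; [destruct Hx; apply cmb_left; auto|].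
      pose proof (H1 x p t Hx Lp Ht). simpl. nra.
    + right. split; [destruct Hx; apply cmb_right; auto|].
      pose proof (H2 x p t Hx Rp Ht). simpl. nra.
  - split; [left; split; auto; lra|].
    intros [x s] t [[Hx Hs]|[Hx Hs]] Ht; simpl in *.
    + left. split; [destruct Hx; apply cmb_left; auto|].
      pose proof (H1 x p t Hx Lp Ht). simpl. nra.
    + right. split; [destruct Hx; apply cmb_right; auto|].
      pose proof (H2 x p t Hx Rp Ht). simpl. nra.
Qed.
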